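(* Let $(Q,\mathcal{K})$ be a learning space with $|Q|\ge 2$ and let $Q'$ be a proper non-empty subset of $Q$. The following are equivalent: (i) $Q'$ is yielding; (ii) every plus child of $\mathcal{K}$ (induced by $Q'$) is a learning space.
   Context: All sets are finite. A knowledge structure is a family $\mathcal{K}$ of subsets of $Q=\bigcup\mathcal{K}\neq\varnothing$ with $\varnothing\in\mathcal{K}$. A learning space is a knowledge structure satisfying: [L1] for $K\subset L$ in $\mathcal{K}$ with $|L\setminus K|=n$ there is a chain $K=K_0\subset\dots\subset K_n=L$ with $K_{i+1}=K_i\cup\{q_i\}\in\mathcal{K}$, $q_i\notin K_i$; [L2] if $K\subset L$ in $\mathcal{K}$ and $K\cup\{q\}\in\mathcal{K}$ with $q\notin K$ then $L\cup\{q\}\in\mathcal{K}$. For $Q'\subset Q$: $K\sim L$ iff $K\cap Q'=L\cap Q'$, with $[K]$ the equivalence class of $K$ in $\mathcal{K}$. The $Q'$-child determined by $K$ is $\mathcal{K}_{[K]}=\{L\setminus\bigcap[K]: L\in\mathcal{K}, L\sim K\}$; it is trivial if it equals $\{\varnothing\}$. For a non-trivial child, the plus child is $\mathcal{K}_{[K]}^+=\mathcal{K}_{[K]}\cup\{\varnothing\}$ (a learning space on its own union). $Q'$ is yielding if for every $K\in\mathcal{K}$ and every state $L$ minimal for inclusion in $[K]$, $|L\setminus\bigcap[K]|\le 1$. *)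

(* Defs.v *)
(* The ground set is modelled inside a finite type T;
   a family of sets is a {set {set T}}, and its domain is its union. *)
From mathcomp Require Import all_boot.
Set Implicit Arguments.
Unset Strict Implicit.
Unset Printing Implicit Defensive.

Section LS.
Variable T : finType.

Definition domain (F : {set {set T}}) : {set T} := \bigcup_(A in F) A.

Definition knowledge_structure (F : {set {set T}}) : Prop :=
  domain F != set0 /\ set0 \in F.

Definition axiom_L1 (F : {set {set T}}) : Prop :=
  forall K L, K \in F -> L \in F -> K \subset L ->
    exists c : nat -> {set T},
      [/\ c 0 = K, c #|L :\: K| = L &
          forall i, i < #|L :\: K| ->
            c i.+1 \in F /\ exists q, q \notin c i /\ c i.+1 = q |: c i].

Definition axiom_L2 (F : {set {set T}}) : Prop :=
  forall K L q, K \in F -> L \in F -> K \subset L -> q \notin K ->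
    q |: K \in F -> q |: L \in F.

Definition learning_space (F : {set {set T}}) : Prop :=
  [/\ knowledge_structure F, axiom_L1 F & axiom_L2 F].

Definition eq_class (F : {set {set T}}) (Q' : {set T}) (K : {set T})
  : {set {set T}} := [set L in F | L :&: Q' == K :&: Q'].

Definition class_meet (F : {set {set T}}) (Q' : {set T}) (K : {set T})
  : {set T} := \bigcap_(L in eq_class F Q' K) L.

Definition child (F : {set {set T}}) (Q' : {set T}) (K : {set T})
  : {set {set T}} := [set L :\: class_meet F Q' K | L in eq_class F Q' K].

Definition trivial_child (F : {set {set T}}) (Q' : {set T}) (K : {set T})
  : Prop := child F Q' K = [set set0].

Definition plus_child (F : {set {set T}}) (Q' : {set T}) (K : {set T})
  : {set {set T}} := child F Q' K :|: [set set0].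

Definition minimal_in (C : {set {set T}}) (L : {set T}) : Prop :=
  L \in C /\ forall L', L' \in C -> L' \subset L -> L' = L.

Definition yielding (F : {set {set T}}) (Q' : {set T}) : Prop :=
  forall K L, K \in F -> minimal_in (eq_class F Q' K) L ->
    #|L :\: class_meet F Q' K| <= 1.

End LS.

(* Main.v *)
Require Import Defs.
From mathcomp Require Import all_boot.

Set Implicit Arguments.
Unset Strict Implicit.
Unset Printing Implicit Defensive.

Section Aux.
Variable T : finType.
Implicit Types (F P : {set {set T}}) (A B K L : {set T}).

Lemma L1_of_step P :
  (forall A B, A \in P -> B \in P -> A \proper B ->
     exists q, [/\ q \notin A, q \in B & q |: A \in P]) ->
  axiom_L1 P.
Proof.
move=> st A B AP BP AB; move hn: #|B :\: A| => n.
elim: n A hn AP AB => [|m IH] A hn AP AB.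
  exists (fun _ => A); split=> //.
  apply/eqP; rewrite eqEsubset AB /=.
  by rewrite -setD_eq0 -cards_eq0 hn.
have pAB : A \proper B.
  rewrite properEneq AB andbT; apply/eqP => e; subst B.
  by rewrite setDv cards0 in hn.
have [q [qA qB qAP]] := st A B AP BP pAB.
have sub : q |: A \subset B by rewrite subUset sub1set qB AB.
have hm : #|B :\: (q |: A)| = m.
  have qBA : q \in B :\: A by rewrite inE qA qB.
  move: hn; rewrite (cardsD1 q) qBA add1n => -[] <-.
  apply: eq_card => x; rewrite !inE; by case: (x == q).
have [c [c0 cm cs]] := IH (q |: A) hm qAP sub.
exists (fun i => if i is i'.+1 then c i' else A); split=> //.
move=> -[|i] hi /=.
  by rewrite c0; split=> //; exists q.
by apply: cs.
Qed.

Lemma step_of_L1 F K L : axiom_L1 F -> K \in F -> L \in F -> K \proper L ->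
  exists q, [/\ q \notin K, q \in L & q |: K \in F].
Proof.
move=> l1 KF LF pKL; have sKL := proper_sub pKL.
have [c [c0 cn cs]] := l1 K L KF LF sKL.
set n := #|L :\: K| in cn cs.
have n0 : 0 < n.
  rewrite lt0n cards_eq0 setD_eq0; apply/negP => h.
  by move: pKL; rewrite properE h andbF.
have [c1F [q [qc qe]]] := cs 0 n0.
have mono : forall m, 1 + m <= n -> c 1 \subset c (1 + m).
  elim=> [|m IH] h; first by rewrite addn0.
  have [_ [q' [_ e]]] := cs (1 + m) h.
  rewrite addnS e; apply: subset_trans (IH (ltnW h)) _; exact: subsetUr.
have := mono n.-1; rewrite add1n prednK // leqnn cn => /(_ isT) s.
exists q; rewrite -c0; split=> //.
  by apply: (subsetP s); rewrite qe !inE eqxx.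
by rewrite -qe.
Qed.

Lemma union_closed F K L : learning_space F -> K \in F -> L \in F -> K :|: L \in F.
Proof.
move=> [[_ s0] l1 l2] KF LF.
have [c [c0 cn cs]] := l1 set0 L s0 LF (sub0set L).
suff : forall i, i <= #|L :\: set0| -> c i \in F /\ K :|: c i \in F.
  by move=> /(_ _ (leqnn _)) []; rewrite cn.
elim=> [|i IH] hi; first by rewrite c0 setU0.
have [ciF Kci] := IH (ltnW hi).
have [cSF [q [qn e]]] := cs i hi.
split=> //; rewrite e setUCA.
apply: (l2 (c i)) => //; first exact: subsetUr.
by rewrite -e.
Qed.

Lemma setDUK' A B : A \subset B -> A :|: (B :\: A) = B.
Proof.
move=> sAB; apply/setP => x; rewrite !inE.
case xA: (x \in A) => //=; by rewrite (subsetP sAB x xA).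
Qed.

Lemma meet_sub F Q' K L : L \in eq_class F Q' K -> class_meet F Q' K \subset L.
Proof. by move=> h; rewrite /class_meet (bigcap_inf L h). Qed.

Lemma sandwich F Q' K A B X : A \in eq_class F Q' K -> B \in eq_class F Q' K ->
  X \in F -> A \subset X -> X \subset B -> X \in eq_class F Q' K.
Proof.
rewrite !inE => /andP[_ /eqP eA] /andP[_ /eqP eB] XF sAX sXB.
rewrite XF /= eqEsubset -{1}eB -eA.
by rewrite !setSI.
Qed.

End Aux.

Theorem mainTheorem6 (T : finType) (F : {set {set T}}) (Q' : {set T}) :
  learning_space F ->
  2 <= #|domain F| ->
  Q' \proper domain F ->
  Q' != set0 ->
  (yielding F Q' <->
   (forall K, K \in F -> ~ trivial_child F Q' K ->
      learning_space (plus_child F Q' K))).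
Proof.
move=> LS _ _ _; have LS' := LS; case: LS' => [[_ s0] l1 l2].
split.
- move=> Y K KF nt.
  set C := eq_class F Q' K; set M := class_meet F Q' K.
  have KC : K \in C by rewrite inE KF eqxx.
  have childE : forall X, X \in child F Q' K -> exists2 L, L \in C & X = L :\: M.
    by move=> X /imsetP[L LC ->]; exists L.
  have inchild : forall L, L \in C -> L :\: M \in child F Q' K.
    by move=> L LC; apply/imsetP; exists L.
  have plusE : forall X, X \in plus_child F Q' K ->
      X = set0 \/ exists2 L, L \in C & X = L :\: M.
    move=> X; rewrite /plus_child inE => /orP[/childE h|]; first by right.
    by rewrite inE => /eqP; left.
  have inplus : forall L, L \in C -> L :\: M \in plus_child F Q' K.
    by move=> L LC; rewrite /plus_child inE inchild.
  have s0P : set0 \in plus_child F Q' K by rewrite /plus_child !inE eqxx orbT.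
  split.
  + split=> //; apply/negP => /eqP d0; apply: nt.
    apply/eqP; rewrite eqEsubset; apply/andP; split.
      apply/subsetP => X Xc; rewrite inE -subset0 -d0.
      apply/subsetP => x xX; apply/bigcupP; exists X => //.
      by rewrite /plus_child inE Xc.
    rewrite sub1set; have := inchild K KC.
    suff -> : K :\: M = set0 by [].
    apply/eqP; rewrite -subset0 -d0.
    apply/subsetP => x xX; apply/bigcupP; exists (K :\: M) => //; exact: inplus.
  + apply: L1_of_step => A B AP BP pAB.
    have [eB|[LB LBC eB]] := plusE B BP.
      by move: pAB; rewrite eB properE sub0set andbF.
    have case1 : forall LA, LA \in C -> A = LA :\: M ->
        exists q, [/\ q \notin A, q \in B & q |: A \in plus_child F Q' K].
      move=> LA LAC eA.
      have MA := meet_sub LAC; have MB := meet_sub LBC.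
      have pL : LA \proper LB.
        have e1 : LA = M :|: A by rewrite eA setDUK'.
        have e2 : LB = M :|: B by rewrite eB setDUK'.
        rewrite e1 e2 properEneq setUS ?(proper_sub pAB) // andbT.
        apply/negP => /eqP e; move: pAB; rewrite properEneq => /andP[/eqP[]].
        have eL : LA = LB by rewrite e1 e2 e.
        by rewrite eA eB eL.
      have LAF : LA \in F by move: LAC; rewrite inE => /andP[].
      have LBF : LB \in F by move: LBC; rewrite inE => /andP[].
      have [q [qn qin qF]] := step_of_L1 l1 LAF LBF pL.
      have qM : q \notin M by apply/negP => /(subsetP MA); rewrite (negbTE qn).
      have qC : q |: LA \in C.
        apply: (sandwich LAC LBC qF); first exact: subsetUr.
        by rewrite subUset sub1set qin (proper_sub pL).
      exists q; split.
      * by rewrite eA inE (negbTE qn) andbF.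
      * by rewrite eB inE qM.
      * have -> : q |: A = (q |: LA) :\: M.
          rewrite eA setDUl; congr (_ :|: _); apply/setP => x; rewrite !inE; case: (x =P q) => [->|_]; by rewrite ?qM ?eqxx ?andbF.
        exact: inplus.
    have [eA|[LA LAC eA]] := plusE A AP; last exact: (case1 LA).
    (* A = set0 : take a minimal element below LB *)
    pose S := [set L in C | L \subset LB].
    have LBS : LB \in S by rewrite inE LBC subxx.
    case: (@arg_minnP _ LB (fun L => L \in S) (fun L : {set T} => #|L|) LBS) => L0.
    rewrite inE => /andP[L0C L0B] L0min.
    have mL0 : minimal_in C L0.
      split=> // L' L'C L'L0; apply/eqP; rewrite eqEcard L'L0 /=.
      by apply: L0min; rewrite inE L'C (subset_trans L'L0 L0B).
    have := Y K L0 KF mL0.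
    rewrite leq_eqVlt ltnS leqn0 cards_eq0 => /orP[/cards1P[q eq]|/eqP e0].
      exists q; rewrite eA; split=> //.
      * by rewrite inE.
      * by rewrite eB; apply: (subsetP (setSD M L0B)); rewrite -/M eq inE.
      * rewrite setU0 -eq; exact: inplus.
    by apply: (case1 L0) => //; rewrite eA -/M e0.
  + move=> A B q AP BP AB qA qAP.
    have [eB|[LB LBC eB]] := plusE B BP.
      have eA : A = set0 by apply/eqP; rewrite -subset0 -eB.
      by rewrite eB -eA.
    have [e|[L1 L1C e1]] := plusE _ qAP.
      by move: (setU11 q A); rewrite e inE.
    have LBF : LB \in F by move: LBC; rewrite inE => /andP[].
    have L1F : L1 \in F by move: L1C; rewrite inE => /andP[].
    have UC : LB :|: L1 \in C.
      rewrite inE union_closed //= setIUl.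
      move: LBC L1C; rewrite !inE => /andP[_ /eqP ->] /andP[_ /eqP ->].
      by rewrite setUid.
    have -> : q |: B = (LB :|: L1) :\: M.
      rewrite setDUl -eB -e1; apply/setP => x; rewrite !inE.
      have := subsetP AB x.
      by case: (x == q); case: (x \in A); case: (x \in B) => // /(_ isT).
    exact: inplus.
- move=> H K L KF [LC Lmin].
  set C := eq_class F Q' K in LC Lmin *; set M := class_meet F Q' K.
  rewrite leqNgt; apply/negP => big.
  have Lch : L :\: M \in child F Q' K by apply/imsetP; exists L.
  have nt : ~ trivial_child F Q' K.
    rewrite /trivial_child => e; move: Lch; rewrite e inE => /eqP e0.
    by move: big; rewrite e0 cards0.
  have [[_ s0P] l1P _] := H K KF nt.
  have LP : L :\: M \in plus_child F Q' K by rewrite /plus_child inE Lch.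
  have [c [c0 cn cs]] := l1P set0 _ s0P LP (sub0set _).
  rewrite setD0 in cn cs.
  have [c1P [q [_ e]]] := cs 0 (ltnW big).
  rewrite c0 setU0 in e.
  have mono : forall m, 1 + m <= #|L :\: M| -> c 1 \subset c (1 + m).
    elim=> [|m IH] h; first by rewrite addn0.
    have [_ [q' [_ e']]] := cs (1 + m) h.
    rewrite addnS e'; apply: subset_trans (IH (ltnW h)) _; exact: subsetUr.
  have := mono (#|L :\: M|).-1.
  rewrite add1n prednK ?(ltnW big) // leqnn cn => /(_ isT) s1.
  move: c1P; rewrite /plus_child inE => /orP[|]; last first.
    by rewrite inE e => /eqP /setP /(_ q); rewrite !inE eqxx.
  move=> /imsetP[L' L'C e'].
  have ML' := meet_sub L'C; have ML := meet_sub LC.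
  have sub : L' \subset L.
    rewrite -(setDUK' ML') -(setDUK' ML) setUS // -e'; exact: s1.
  have := Lmin L' L'C sub => eL.
  move: big; rewrite -eL -e' e cards1.
  by [].
Qed.
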